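(* Let $\gamma > \frac{1 + \sqrt{5}}{2}$ and let $I$ be a $\gamma$-stable instance of the metric Steiner tree problem with optimal Steiner tree $\mathrm{OPT}$. Let $H$ be a subgraph of $\mathrm{OPT}$ and let $ab$ be an edge of $H$. If $c \in V$ is a vertex with $w_{ca} \ge \gamma w_{ab}$, then $ca$ is not an edge of $\mathrm{OPT}$.
   Context: An instance of the metric Steiner tree problem consists of a finite set $V$ of points of a metric space with metric $d$, a set $T \subseteq V$ of terminals, and the complete graph on $V$ with edge weights $w_{uv} = d(u,v)$. Points of $V \setminus T$ are Steiner points. A Steiner tree is a tree in this complete graph whose vertex set contains all of $T$; its weight is the sum of its edge weights. For $\gamma > 1$, the instance is $\gamma$-stable if it has a minimum-weight Steiner tree $\mathrm{OPT}$ such that for every $w' : V \times V \to \mathbb{R}_{\ge 0}$ with $w_{uv} \le w'_{uv} \le \gamma w_{uv}$ for all $u,v$, every minimum-weight Steiner tree with respect to $w'$ equals $\mathrm{OPT}$. *)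

(* Defs.v *)
From HB Require Import structures.
From mathcomp Require Import all_boot all_order all_algebra.
From mathcomp Require Import reals.
Set Implicit Arguments. Unset Strict Implicit. Unset Printing Implicit Defensive.
Import Order.TTheory GRing.Theory Num.Theory.
Local Open Scope ring_scope.

Section Steiner.
Variables (R : realType) (V : finType).

Definition is_metric (d : V -> V -> R) : Prop :=
  [/\ forall x y, 0 <= d x y,
      forall x y, d x y = 0 <-> x = y,
      forall x y, d x y = d y x &
      forall x y z, d x z <= d x y + d y z].

(* A (sub)graph of the complete graph on V: a vertex set and a set of
   edges, each edge being a 2-element subset of the vertex set. *)
Record graph := Graph { gverts : {set V}; gedges : {set {set V}} }.

Definition wf_graph (G : graph) : Prop :=
  forall e, e \in gedges G -> (e \subset gverts G) /\ #|e| = 2%N.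

Definition adj (G : graph) : rel V :=
  fun x y => (x != y) && ([set x; y] \in gedges G).

Definition connected_graph (G : graph) : Prop :=
  forall x y, x \in gverts G -> y \in gverts G -> connect (adj G) x y.

Definition acyclic (G : graph) : Prop :=
  ~ exists s : seq V, [/\ uniq s, (3 <= size s)%N & cycle (adj G) s].

Definition is_tree (G : graph) : Prop :=
  [/\ wf_graph G, connected_graph G & acyclic G].

Definition steiner_tree (T : {set V}) (G : graph) : Prop :=
  is_tree G /\ T \subset gverts G.

Definition tree_weight (W : {set V} -> R) (G : graph) : R :=
  \sum_(e in gedges G) W e.

(* edge weight induced by d: for e = {u,v} with u <> v this equals d u v
   (given d symmetric and d x x = 0) *)
Definition dE (d : V -> V -> R) (e : {set V}) : R :=
  (\sum_(u in e) \sum_(v in e) d u v) / 2.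

Definition min_steiner (T : {set V}) (W : {set V} -> R) (G : graph) : Prop :=
  steiner_tree T G /\
  forall G', steiner_tree T G' -> tree_weight W G <= tree_weight W G'.

Definition perturbation (d : V -> V -> R) (gamma : R) (W' : {set V} -> R) : Prop :=
  forall u v, u != v -> d u v <= W' [set u; v] <= gamma * d u v.

Definition stable_opt (d : V -> V -> R) (T : {set V}) (gamma : R) (OPT : graph) : Prop :=
  min_steiner T (dE d) OPT /\
  forall W', perturbation d gamma W' ->
    forall G, min_steiner T W' G -> G = OPT.

Definition gamma_stable (d : V -> V -> R) (T : {set V}) (gamma : R) : Prop :=
  exists OPT, stable_opt d T gamma OPT.

End Steiner.

(* Main.v *)
Require Import Defs.
From HB Require Import structures.
From mathcomp Require Import all_boot all_order all_algebra.
From mathcomp Require Import reals.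
From mathcomp Require Import ring lra.
From Stdlib Require Import ClassicalEpsilon.
Set Implicit Arguments. Unset Strict Implicit. Unset Printing Implicit Defensive.
Import Order.TTheory GRing.Theory Num.Theory.
Local Open Scope ring_scope.

Section Aux.
Variables (R : realType) (V : finType).

Lemma exists_min (T : {set V}) (W : {set V} -> R) (G0 : graph V) :
  steiner_tree T G0 -> exists G, min_steiner T W G.
Proof.
move=> HG0.
pose sb := fun p : ({set V} * {set {set V}}) =>
  if excluded_middle_informative (steiner_tree T (Graph p.1 p.2)) then true else false.
have sbP p : sb p -> steiner_tree T (Graph p.1 p.2).
  by rewrite /sb; case: excluded_middle_informative.
have sbI G : steiner_tree T G -> sb (gverts G, gedges G).
  by case: G => vs es /= H; rewrite /sb; case: excluded_middle_informative.
pose F := fun p : ({set V} * {set {set V}}) => tree_weight W (Graph p.1 p.2).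
have Pi0 := sbI _ HG0.
case: (arg_minP F Pi0) => p Pp Hmin.
exists (Graph p.1 p.2); split; first exact: sbP.
move=> G' HG'; have := Hmin _ (sbI _ HG'); rewrite /F /=.
by case: G' {HG'}.
Qed.

Lemma dE2 (d : V -> V -> R) u v : is_metric d -> u != v -> dE d [set u; v] = d u v.
Proof.
move=> [_ d0 dsym _] uv.
have Hu : u \notin [set v] by rewrite in_set1.
rewrite /dE big_setU1 //= big_set1 big_setU1 //= big_set1 big_setU1 //= big_set1.
rewrite (proj2 (d0 u u) erefl) (proj2 (d0 v v) erefl) (dsym v u).
rewrite addr0 add0r.
by field.
Qed.

Lemma golden (g : R) : (1 + Num.sqrt 5) / 2 < g -> g + 1 < g * g.
Proof.
move=> H.
have s0 : 0 <= Num.sqrt (5:R) by exact: sqrtr_ge0.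
have s5 : Num.sqrt (5:R) ^+ 2 = 5 by rewrite sqr_sqrtr // ler0n.
rewrite expr2 in s5.
nra.
Qed.

Lemma adj_sym (G : graph V) x y : adj G x y = adj G y x.
Proof. by rewrite /adj eq_sym setUC. Qed.

Lemma set2_eq (x y u v : V) : u != v -> [set x; y] = [set u; v] ->
  (x = u /\ y = v) \/ (x = v /\ y = u).
Proof.
move=> uv H.
have ux : u \in [set x; y] by rewrite H set21.
have vx : v \in [set x; y] by rewrite H set22.
rewrite !inE in ux vx.
case/orP: ux => /eqP ux; case/orP: vx => /eqP vx; subst.
- by rewrite eqxx in uv.
- by left.
- by right.
- by rewrite eqxx in uv.
Qed.

End Aux.

Section G2.
Variables (V : finType) (Vs : {set V}) (E : {set {set V}}) (a b c : V).
Hypotheses (ca : c != a) (ab : a != b) (bc : b != c)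
  (eab : [set a; b] \in E) (eca : [set c; a] \in E)
  (acyc : acyclic (Graph Vs E)).

Let e0 := [set c; a].
Let f := [set c; b].
Let E' := f |: (E :\ e0).
Let GO := Graph Vs E.
Let G' := Graph Vs E'.
Let r x y := adj GO x y && ([set x; y] != e0).

Lemma noCyc s : uniq s -> (3 <= size s)%N -> cycle (adj GO) s -> False.
Proof. by move=> Hu Hs Hc; apply: acyc; exists s. Qed.

Lemma rsub : subrel r (adj GO).
Proof. by move=> x y /andP[]. Qed.

Lemma adjG'E x y : adj G' x y -> (x = c /\ y = b) \/ (x = b /\ y = c) \/ r x y.
Proof.
rewrite /adj /= => /andP[xy]; rewrite in_setU1 in_setD1 => /orP[/eqP Hf | /andP[Hne HE]].
- have cb : c != b by rewrite eq_sym.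
  case: (set2_eq cb Hf) => [[-> ->]|[-> ->]]; [by left | by right; left].
- by right; right; rewrite /r /adj /= xy HE Hne.
Qed.

Lemma KL q : uniq (c :: q) -> path r c q -> last c q = b -> False.
Proof.
move=> Hu Hp Hl.
have adjac : adj GO a c by rewrite /adj /= eq_sym ca setUC.
case: (boolP (a \in q)) => aq.
- case/splitPr: aq Hu Hp Hl => q1 q2 Hu Hp Hl.
  rewrite cat_path /= in Hp; case/and3P: Hp => Hp1 Hra _.
  apply: (@noCyc (c :: rcons q1 a)).
  + have : uniq ((c :: rcons q1 a) ++ q2) by rewrite cat_cons -cats1 -catA.
    by rewrite cat_uniq => /andP[].
  + rewrite /= size_rcons; case: q1 Hp1 Hra {Hu Hl} => //= _.
    by rewrite /r eqxx andbF.
  + rewrite /= rcons_path last_rcons adjac andbT rcons_path (rsub Hra) andbT.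
    exact: (sub_path rsub Hp1).
- apply: (@noCyc (c :: rcons q a)).
  + move: Hu; rewrite /= mem_rcons inE negb_or ca rcons_uniq aq /=.
    by case/andP=> -> ->.
  + case: q Hu Hp Hl aq => [/= _ _ Hl|x q _ _ _ _]; last by rewrite /= size_rcons.
    by move: bc; rewrite Hl eqxx.
  + rewrite /= rcons_path last_rcons adjac andbT rcons_path Hl (sub_path rsub Hp) /=.
    by rewrite /adj /= eq_sym ab setUC eab.
Qed.

Lemma L1 q1 : q1 != [::] -> uniq (c :: rcons q1 b) -> path (adj G') c (rcons q1 b) -> False.
Proof.
case: q1 => // x q1 _ Hu Hp.
apply: (@KL (rcons (x :: q1) b)) => //; last by rewrite last_rcons.
have cnot : c \notin rcons (x :: q1) b by case/andP: Hu.
have bnot : b \notin x :: q1.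
  have : uniq (rcons (x :: q1) b) by case/andP: Hu.
  by rewrite rcons_uniq => /andP[].
move: Hp; rewrite rcons_cons /= => /andP[Hcx Hp].
apply/andP; split.
- case: (adjG'E Hcx) => [[_ xb]|[[cb _]|//]].
  + by move: bnot; rewrite xb inE eqxx.
  + by move: bc; rewrite cb eqxx.
- apply: (@sub_in_path _ (predC1 c) (adj G') r) Hp.
  + move=> y z /= yc zc /adjG'E [[yc' _]|[[_ zc']|//]].
    * by move: yc; rewrite yc' inE eqxx.
    * by move: zc; rewrite zc' inE eqxx.
  + apply/allP => z zin /=; apply/eqP => zc.
    by move: cnot; rewrite -zc rcons_cons zin.
Qed.

Lemma acycG' : acyclic G'.
Proof.
move=> [s [Hu Hs Hc]].
case: (boolP (c \in s)) => cs; last first.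
  apply: (@noCyc s) => //.
  apply: (@sub_in_cycle _ (predC1 c) (adj G') (adj GO)) Hc.
  + move=> y z /= yc zc /adjG'E [[yc' _]|[[_ zc']|/rsub //]].
    * by move: yc; rewrite yc' inE eqxx.
    * by move: zc; rewrite zc' inE eqxx.
  + by apply/allP => z zin /=; apply/eqP => zc; move: cs; rewrite -zc zin.
case: (boolP (b \in s)) => bs; last first.
  apply: (@noCyc s) => //.
  apply: (@sub_in_cycle _ (predC1 b) (adj G') (adj GO)) Hc.
  + move=> y z /= yc zc /adjG'E [[_ zc']|[[yc' _]|/rsub //]].
    * by move: zc; rewrite zc' inE eqxx.
    * by move: yc; rewrite yc' inE eqxx.
  + by apply/allP => z zin /=; apply/eqP => zc; move: bs; rewrite -zc zin.
rewrite -(rot_uniq (index c s)) in Hu.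
rewrite -(size_rot (index c s)) in Hs.
rewrite -(rot_cycle (index c s)) in Hc.
rewrite -(mem_rot (index c s)) in bs.
rewrite (rot_index cs) in Hu Hs Hc bs.
move: Hu Hs Hc bs; set p := (_ ++ _) => Hu Hs Hc bs.
have bp : b \in p by move: bs; rewrite inE (negbTE bc).
case/splitPr: bp Hu Hs Hc => p1 p2 Hu Hs Hc.
rewrite /= rcons_cat /= cat_path /= in Hc.
case/and3P: Hc => Hc1 Hcb Hc2.
case: p1 Hu Hs Hc1 Hcb => [|x p1] Hu Hs Hc1 Hcb.
- have H2 : path (fun z y => adj G' y z) b (rcons p2 c).
    by rewrite (@eq_path _ _ (adj G')) // => y z; exact: adj_sym.
  rewrite -rev_path last_rcons belast_rcons rev_cons in H2.
  apply: (@L1 (rev p2)) => //.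
  + by move: Hs; rewrite -size_eq0 size_rev -lt0n.
  + by rewrite -rev_cons /= mem_rev rev_uniq.
- apply: (@L1 (x :: p1)) => //.
  + have : uniq ((c :: rcons (x :: p1) b) ++ p2) by rewrite cat_cons -cats1 -catA.
    by rewrite cat_uniq => /andP[].
  + by rewrite rcons_path Hc1.
Qed.

Lemma fnotE : f \notin E.
Proof.
apply/negP => fE; apply: (@noCyc [:: c; b; a]).
- by rewrite /= !inE negb_or (eq_sym c b) bc ca eq_sym ab.
- by [].
- rewrite /= /adj /= (eq_sym c b) bc fE eq_sym ab setUC eab /=.
  by rewrite eq_sym ca setUC eca.
Qed.

Lemma adjG'cb : adj G' c b.
Proof. by rewrite /adj /= eq_sym bc in_setU1 eqxx. Qed.

Lemma adjG'ba : adj G' b a.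
Proof.
rewrite /adj /= eq_sym ab in_setU1 in_setD1 setUC eab andbT; apply/orP; right.
apply/eqP => /(set2_eq ca) [[ac _]|[_ bc']].
- by move: ca; rewrite ac eqxx.
- by move: bc; rewrite bc' eqxx.
Qed.

Lemma conG' : connected_graph GO -> connected_graph G'.
Proof.
move=> Hc x y xV yV.
apply: (connect_sub _ (Hc x y xV yV)) => u v /andP[uv uvE].
case: (boolP ([set u; v] == e0)) => He; last first.
  by apply: connect1; rewrite /adj /= uv in_setU1 in_setD1 He uvE orbT.
case: (set2_eq ca (eqP He)) => [[-> ->]|[-> ->]].
- apply: (connect_trans (connect1 adjG'cb)); apply: connect1; exact: adjG'ba.
- have h1 : adj G' a b by rewrite adj_sym adjG'ba.
  have h2 : adj G' b c by rewrite adj_sym adjG'cb.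
  exact: connect_trans (connect1 h1) (connect1 h2).
Qed.

Lemma wfG' : wf_graph GO -> wf_graph G'.
Proof.
move=> Hw e; rewrite /= in_setU1 in_setD1 => /orP[/eqP ->|/andP[_ eE]]; last exact: Hw.
split; last by rewrite cards2 eq_sym bc.
have cV : c \in Vs by apply: (subsetP (Hw _ eca).1); rewrite set21.
have bV : b \in Vs by apply: (subsetP (Hw _ eab).1); rewrite set22.
by apply/subsetP => z; rewrite !inE => /orP[] /eqP ->.
Qed.

End G2.

Theorem mainTheorem8 (R : realType) (V : finType) (d : V -> V -> R)
  (T : {set V}) (gamma : R) (OPT : graph V)
  (H : {set {set V}}) (a b c : V) :
  (1 + Num.sqrt 5) / 2 < gamma ->
  is_metric d ->
  stable_opt d T gamma OPT ->
  H \subset gedges OPT ->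
  [set a; b] \in H ->
  gamma * d a b <= d c a ->
  [set c; a] \notin gedges OPT.
Proof.
case: OPT => Vs E /=.
move=> Hg Hm [[HO HOmin] Hstab] HsubH abH Hineq.
apply/negP => eca.
case: HO => [[Hwf Hconn Hacyc] HTsub].
have eab : [set a; b] \in E := subsetP HsubH _ abH.
have ca : c != a by move: (Hwf _ eca).2; rewrite cards2; case: (c != a).
have ab : a != b by move: (Hwf _ eab).2; rewrite cards2; case: (a != b).
case: (Hm) => d0 dz dsym dtri.
have gg := golden Hg.
have s0 : 0 <= Num.sqrt (5:R) by exact: sqrtr_ge0.
have g1 : 1 < gamma by nra.
have dpos x y : x != y -> 0 < d x y.
  move=> xy; rewrite lt_def d0 andbT; apply/negP => /eqP /dz /eqP.
  by rewrite (negbTE xy).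
have dab := dpos _ _ ab.
have dca := dpos _ _ ca.
have bc : b != c.
  apply/eqP => bc; move: Hineq; rewrite -bc (dsym b a) => Hi; nra.
have key : d c b < gamma * d c a.
  have := dtri c a b; nra.
pose W' := fun e : {set V} => if e \in E then gamma * dE d e else dE d e.
have Hpert : perturbation d gamma W'.
  move=> u v uv; rewrite /W' dE2 //; have := d0 u v.
  by case: ifP => _ h; apply/andP; split; nra.
pose G' := Graph Vs ([set c; b] |: (E :\ [set c; a])).
have HG' : steiner_tree T G'.
  split => //; split.
  - exact: (wfG' bc eab eca Hwf).
  - exact: (conG' ca ab bc eab Hconn).
  - exact: (acycG' ca ab bc eab eca Hacyc).
have fE : [set c; b] \notin E := fnotE ca ab bc eab eca Hacyc.
have Hlt : tree_weight W' G' < tree_weight W' (Graph Vs E).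
  rewrite /tree_weight /= big_setU1 /=; last by rewrite in_setD1 (negbTE fE) andbF.
  by rewrite (big_setD1 _ eca) /= ltrD2r /W' (negbTE fE) eca !dE2 // eq_sym bc.
have [Gs Hmin] := exists_min W' HG'.
have HGs := Hstab W' Hpert Gs Hmin.
rewrite HGs in Hmin.
by have := Hmin.2 G' HG'; rewrite leNgt Hlt.
Qed.
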